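(* Let $(E,C)$ be a finite bipartite separated graph with $\mathcal H(F_\infty,D^\infty)=\{\emptyset,F_\infty^0\}$. Then for every $v\in F_\infty^0$ there is at most one $X\in D^\infty_v$ with $|X|>1$.
   Context: Separated graph $(E,C)$: $E=(E^0,E^1,r,s)$, $C=\bigsqcup_vC_v$ with $C_v$ a partition of $r^{-1}(v)$ into non-empty sets. Finite bipartite: $E$ finite, $E^0=E^{0,0}\sqcup E^{0,1}$, $s(E^1)=E^{0,1}$, $r(E^1)=E^{0,0}$. Write $C_u=\{X^u_1,\dots,X^u_{k_u}\}$. $(E_1,C^1)$: $E_1^{0,0}=E^{0,1}$, $E_1^{0,1}=\{v(x_1,\dots,x_{k_u}):u\in E^{0,0},x_j\in X^u_j\}$, edges $\alpha^{x_i}(x_1,\dots,\widehat{x_i},\dots,x_{k_u})$ with range $s(x_i)$ and source $v(x_1,\dots,x_{k_u})$, $C^1_v=\{X(x):x\in s^{-1}(v)\}$ with $X(x_i)=\{\alpha^{x_i}(x_1,\dots,\widehat{x_i},\dots,x_{k_u}):x_j\in X^u_j,j\ne i\}$. Inductively $(E_{n+1},C^{n+1})=((E_n)_1,(C^n)^1)$, $(E_0,C^0)=(E,C)$, and $(F_\infty,D^\infty)=\bigcup_n(E_n,C^n)$ glued along $E_n^{0,1}=E_{n+1}^{0,0}$ (so $D^\infty_v=C^n_v$ for $v\in E_n^{0,0}$). For a separated graph $(F,D)$, $H\subseteq F^0$ is hereditary if $r(e)\in H\Rightarrow s(e)\in H$, and $D$-saturated if $s(X)\subseteq H$ for some $X\in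 D_v$ implies $v\in H$; $\mathcal H(F,D)$ is the set of hereditary $D$-saturated subsets. *)

(* Defs.v *)
From mathcomp Require Import all_boot.
Set Implicit Arguments. Unset Strict Implicit. Unset Printing Implicit Defensive.

(** One "bipartite layer" of a separated graph:
    vertices V0 (= ranges, E^{0,0}) and V1 (= sources, E^{0,1}),
    edges Ed with range rg : Ed -> V0 and source sc : Ed -> V1.
    The separation C is given by an index type Bk of blocks, each block
    b lying over the vertex bv b, and bk e = the block containing e.
    So C_v = { {e | bk e = b} : bv b = v }, a partition of r^{-1}(v)
    (bk_rg); blocks are nonempty when bk is surjective. *)
Record SLayer := mkSLayer {
  V0 : Type; V1 : Type; Ed : Type; Bk : Type;
  rg : Ed -> V0; sc : Ed -> V1; bv : Bk -> V0; bk : Ed -> Bk;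
  bk_rg : forall e, bv (bk e) = rg e }.

(** The construction (E_1, C^1).
    E_1^{0,1}: vertices v(x_1,...,x_{k_u}) : a vertex u in E^{0,0} together
    with a choice of one edge x_X in each block X of C_u. *)
Definition nV1 (L : SLayer) : Type :=
  { u : V0 L & forall b : {b : Bk L | bv b = u}, {e : Ed L | bk e = proj1_sig b} }.

(** Edges alpha^{x_i}(x_1,..,^x_i,..,x_k): a vertex w = v(x_1..x_k) and a block
    index i of C_u; source w, range s(x_i). *)
Definition nEd (L : SLayer) : Type := { w : nV1 L & {b : Bk L | bv b = projT1 w} }.

Definition nchosen (L : SLayer) (a : nEd L) : Ed L :=
  proj1_sig (projT2 (projT1 a) (projT2 a)).

Definition nrg (L : SLayer) (a : nEd L) : V1 L := sc (nchosen a).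

(** The blocks of C^1 at y in E_1^{0,0} = E^{0,1} are indexed by the edges
    x in s^{-1}(y): X(x) = { alpha^{x}(...) }, i.e. the edges a with
    nchosen a = x. *)
Definition next (L : SLayer) : SLayer :=
  @mkSLayer (V1 L) (nV1 L) (nEd L) (Ed L)
    (@nrg L) (fun a => projT1 a) (@sc L) (@nchosen L) (fun a => erefl).

Fixpoint lay (L : SLayer) (n : nat) : SLayer :=
  match n with 0 => L | S m => next (lay L m) end.

(** F_infinity^0 : disjoint union of the E_n^{0,0} (note E_n^{0,1} = E_{n+1}^{0,0}
    definitionally). Edges of F_infinity are the edges of the E_n; D^infty_v
    for v in E_n^{0,0} is C^n_v. *)
Definition FV (L : SLayer) : Type := {n : nat & V0 (lay L n)}.

Definition FVin (L : SLayer) (n : nat) (v : V0 (lay L n)) : FV L :=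
  existT (fun m => V0 (lay L m)) n v.

Definition hereditary (L : SLayer) (H : FV L -> Prop) : Prop :=
  forall n (e : Ed (lay L n)),
    H (FVin (rg e)) -> H (@FVin L n.+1 (sc e)).

Definition saturated (L : SLayer) (H : FV L -> Prop) : Prop :=
  forall n (b : Bk (lay L n)),
    (forall e : Ed (lay L n), bk e = b -> H (@FVin L n.+1 (sc e))) ->
    H (FVin (bv b)).

Definition only_trivial_HS (L : SLayer) : Prop :=
  forall H : FV L -> Prop, hereditary H -> saturated H ->
    (forall v, ~ H v) \/ (forall v, H v).

Definition big_block (L : SLayer) n (b : Bk (lay L n)) : Prop :=
  exists e1 e2 : Ed (lay L n), e1 <> e2 /\ bk e1 = b /\ bk e2 = b.

(* Main.v *)
Require Import Defs.
From Stdlib Require Import Classical ClassicalEpsilon Eqdep_dec PeanoNat.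
From mathcomp Require Import all_boot.
Set Implicit Arguments. Unset Strict Implicit. Unset Printing Implicit Defensive.

Lemma exists_tuple (L : SLayer) (u : V0 L) (f : Bk L -> Ed L -> Prop) :
  (forall b, bv b = u -> exists e, bk e = b /\ f b e) ->
  exists g : (forall b : {b : Bk L | bv b = u}, {e : Ed L | bk e = proj1_sig b}),
    forall b, f (proj1_sig b) (proj1_sig (g b)).
Proof.
move=> h.
exists (fun b => exist _ (proj1_sig (constructive_indefinite_description _
          (h (proj1_sig b) (proj2_sig b))))
          (proj1 (proj2_sig (constructive_indefinite_description _
          (h (proj1_sig b) (proj2_sig b)))))).
move=> [b hb] /=.
set c := constructive_indefinite_description _ _.
exact: (proj2 (proj2_sig c)).
Qed.

Lemma nonempty (L : SLayer) (hne : forall b : Bk L, exists e, bk e = b) m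
  (b : Bk (lay L m)) : exists e, bk e = b.
Proof.
elim: m b => [|m IH] b; first exact: hne.
pose f := (fun b' e => b' = bk b -> e = b).
have hex : forall b', bv b' = (rg b) -> exists e, bk e = b' /\ f b' e.
  move=> b' hb'; rewrite /f; case: (classic (b' = bk b)) => [->|hc].
    by exists b.
  have [e he] := IH b'; exists e; split => // h; by case: hc.
have [g hg] := @exists_tuple (lay L m) (rg b) f hex; rewrite /f in hg; clear hex.
exists (existT _ (existT _ (rg b) g) (exist _ (bk b) (bk_rg b)) : nEd (lay L m)).
exact: (hg (exist _ (bk b) (bk_rg b))).
Qed.

Inductive Reach (L : SLayer) (n : nat) (bad : nV1 (lay L n) -> Prop) : FV L -> Prop :=
| R0 : forall t, bad t -> Reach bad (@FVin L n.+2 t)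
| RS : forall m (e : Ed (lay L m)), Reach bad (FVin (rg e)) -> Reach bad (@FVin L m.+1 (sc e)).

Lemma reach_level L n bad p : @Reach L n bad p -> n.+2 <= projT1 p.
Proof. elim=> [t _|m e _ IH] //=. by apply: leq_trans IH _. Qed.

Lemma FVin_inj L m (x y : V0 (lay L m)) : @FVin L m x = FVin y -> x = y.
Proof. move=> h. exact: (inj_pair2_eq_dec _ Nat.eq_dec _ _ _ _ h). Qed.

Lemma reach_inv_n2 L n bad (t : nV1 (lay L n)) :
  @Reach L n bad (@FVin L n.+2 t) -> bad t.
Proof.
have: forall p, @Reach L n bad p -> forall (t0 : nV1 (lay L n)),
   p = @FVin L n.+2 t0 -> bad t0.
  move=> p; case => [t' bt'|m e hr] t0 heq.
    by have := @FVin_inj L n.+2 _ _ heq => <-.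
  have hm := f_equal (@projT1 _ _) heq; simpl in hm.
  have := reach_level hr => /=. case: hm => ->. by rewrite ltnn.
by move=> H h; apply: (H _ h).
Qed.

Lemma reach_inv_S L n bad m (t : nV1 (lay L m)) : n.+1 <= m ->
  @Reach L n bad (@FVin L m.+2 t) ->
  exists e' : nEd (lay L m), projT1 e' = t /\ Reach bad (@FVin L m.+1 (nrg e')).
Proof.
move=> hnm.
have: forall p, @Reach L n bad p -> forall (t0 : nV1 (lay L m)),
   p = @FVin L m.+2 t0 ->
   exists e' : nEd (lay L m), projT1 e' = t0 /\ Reach bad (@FVin L m.+1 (nrg e')).
  move=> p; case => [t' bt'|m' e hr] t0 heq.
    have hm := f_equal (@projT1 _ _) heq; simpl in hm.
    case: hm => hm; subst m. by rewrite ltnn in hnm.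
  have hm := f_equal (@projT1 _ _) heq; simpl in hm.
  case: hm => hm; subst m'.
  have := @FVin_inj L m.+2 _ _ heq => he.
  by exists e.
by move=> H h; apply: (H _ h).
Qed.

Lemma key L n bad (hne : forall b : Bk L, exists e, bk e = b)
  (hbad : forall e0 : Ed (lay L n),
     exists g : (forall b : {b : Bk (lay L n) | bv b = rg e0},
                   {e : Ed (lay L n) | bk e = proj1_sig b}),
       proj1_sig (g (exist _ (bk e0) (bk_rg e0))) = e0 /\
       ~ bad (existT _ (rg e0) g)) :
  forall m (b : Bk (lay L m)), ~ @Reach L n bad (FVin (bv b)) ->
    exists e, bk e = b /\ ~ Reach bad (@FVin L m.+1 (sc e)).
Proof.
elim=> [|m IH] b hb.
  have [e he] := nonempty hne b.
  exists e; split => // h. by have := reach_level h.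
case: (ltngtP m n) => hmn.
- have [e he] := nonempty hne b.
  exists e; split => // h. have := reach_level h => /=. 
  move=> h2; by rewrite !ltnS leqNgt hmn in h2.
-
  have hu : ~ Reach bad (FVin (rg b)) := fun h => hb (RS h).
  pose f := (fun b' e => (b' = bk b -> e = b) /\ ~ Reach bad (@FVin L m.+1 (sc e))).
  have hex : forall b', bv b' = (rg b) -> exists e, bk e = b' /\ f b' e.
    move=> b' hb'; rewrite /f; case: (classic (b' = bk b)) => [->|hc].
      by exists b.
    have [e [he1 he2]] := IH b' ltac:(by rewrite hb').
    by exists e; split => //; split.
  have [g hg] := @exists_tuple (lay L m) (rg b) f hex; rewrite /f in hg; clear hex.
  exists (existT _ (existT _ (rg b) g) (exist _ (bk b) (bk_rg b)) : nEd (lay L m)).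
  split; first exact: (hg (exist _ (bk b) (bk_rg b))).1.
  move=> h. have [e' [he1 he2]] := reach_inv_S hmn h.
  case: e' he1 he2 => t' bi /= he1; subst t'.
  exact: (hg bi).2.
- subst m.
  have [g [hg1 hg2]] := hbad b.
  exists (existT _ (existT _ (rg b) g) (exist _ (bk b) (bk_rg b)) : nEd (lay L n)).
  split; first exact: hg1.
  by move=> h; apply: hg2; apply: (reach_inv_n2 h).
Qed.

Theorem lemma8
  (V00 V01 Ed0 Bk0 : finType)
  (r : Ed0 -> V00) (s : Ed0 -> V01) (bv0 : Bk0 -> V00) (bk0 : Ed0 -> Bk0)
  (hbk : forall e, bv0 (bk0 e) = r e)
  (hne : forall b, exists e, bk0 e = b) :
  let L := @mkSLayer V00 V01 Ed0 Bk0 r s bv0 bk0 hbk in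
  only_trivial_HS L ->
  forall (n : nat) (v : V0 (lay L n)) (b1 b2 : Bk (lay L n)),
    bv b1 = v -> bv b2 = v -> big_block b1 -> big_block b2 -> b1 = b2.
Proof.
move=> L hT n v b1 b2 h1 h2 [x1 [x2 [hx [hx1 hx2]]]] [y1 [y2 [hy [hy1 hy2]]]].
apply: NNPP => hneq.
have hneL : forall b : Bk L, exists e, bk e = b := hne.
pose bad (t : nV1 (lay L n)) := exists (hX : bv b1 = projT1 t) (hY : bv b2 = projT1 t),
  proj1_sig (projT2 t (exist _ b1 hX)) <> x1 /\ proj1_sig (projT2 t (exist _ b2 hY)) <> y1.
have hbad : forall e0 : Ed (lay L n),
     exists g : (forall b : {b : Bk (lay L n) | bv b = rg e0},
                   {e : Ed (lay L n) | bk e = proj1_sig b}),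
       proj1_sig (g (exist _ (bk e0) (bk_rg e0))) = e0 /\
       ~ bad (existT _ (rg e0) g).
  move=> e0.
  pose f := (fun b e => (b = bk e0 -> e = e0) /\ (b = b1 -> b1 <> bk e0 -> e = x1)
              /\ (b = b2 -> b1 = bk e0 -> e = y1)).
  have hex : forall b', bv b' = (rg e0) -> exists e, bk e = b' /\ f b' e.
    move=> b hb; rewrite /f.
    case: (classic (b = bk e0)) => [->|c1].
      exists e0; split => //; split => //; split.
        by move=> -> h; exfalso; apply: h.
      by move=> -> h; exfalso; apply: hneq.
    case: (classic (b = b1)) => [eb|c2]; first subst b.
      by exists x1; split => //; split; intros; try split; intros; tauto.
    case: (classic (b = b2)) => [eb|c3]; first subst b.
      by exists y1; split => //; split; intros; try split; intros; tauto.
    have [e he] := nonempty hneL b.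
    by exists e; split => //; split; intros; try split; intros; tauto.
  have [g hg] := @exists_tuple (lay L n) (rg e0) f hex; rewrite /f in hg; clear hex.
  exists g; split; first exact: (hg (exist _ (bk e0) (bk_rg e0))).1.
  move=> [hX [hY [n1 n2]]].
  case: (classic (b1 = bk e0)) => hc.
    by apply: n2; exact: (hg (exist _ b2 hY)).2.2 erefl hc.
  by apply: n1; exact: (hg (exist _ b1 hX)).2.1 erefl hc.
have hered : hereditary (@Reach L n bad).
  move=> m e h; exact: RS h.
have sat : saturated (@Reach L n bad).
  move=> m b hall; apply: NNPP => hnr.
  have [e [he hnr2]] := key hneL hbad hnr.
  exact: hnr2 (hall e he).
case: (hT _ hered sat) => [hnone|hall].
  pose f := (fun b e => (b = b1 -> e = x2) /\ (b = b2 -> e = y2)).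
  have hex : forall b', bv b' = v -> exists e, bk e = b' /\ f b' e.
    move=> b hb; rewrite /f.
    case: (classic (b = b1)) => [eb|c2]; first subst b.
      exists x2; split => //; split => // h; by exfalso; apply: hneq.
    case: (classic (b = b2)) => [eb|c3]; first subst b.
      by exists y2; split => //; split.
    have [e he] := nonempty hneL b.
    by exists e; split => //; split.
  have [g hg] := @exists_tuple (lay L n) v f hex; rewrite /f in hg; clear hex.
  apply: (hnone (@FVin L n.+2 (existT _ v g))); apply: R0.
  exists h1; exists h2; split => /=.
    rewrite (hg (exist _ b1 h1)).1 //. by move=> h; apply: hx.
  rewrite (hg (exist _ b2 h2)).2 //. by move=> h; apply: hy.
have := reach_level (hall (FVin v)) => /=. by rewrite ltnNge leqnSn.
Qed.
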